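(* Let $\beta,\lambda>0$, let $K_-\le K_+$ be integers, and let $f(x)=\sum_{k=K_-}^{K_+}c_ke^{-\lambda(x-\beta k)^2}$ with $c_k\in\mathbb C$, $c_{K_-}\neq0$, $c_{K_+}\neq0$. Let $\Gamma\subset\mathbb R$ be a set of $2(K_+-K_-)+1$ distinct points. Then $f$ is determined, up to a unimodular constant and conjugation, by the phaseless samples $|f(\gamma)|$ and $|f'(\gamma)|$, $\gamma\in\Gamma$: that is, if $g(x)=\sum_{k=K_-}^{K_+}d_ke^{-\lambda(x-\beta k)^2}$ with $d_k\in\mathbb C$ satisfies $|g(\gamma)|=|f(\gamma)|$ and $|g'(\gamma)|=|f'(\gamma)|$ for all $\gamma\in\Gamma$, then there is $z\in\mathbb C$, $|z|=1$, with $g=zf$ or $g=z\overline f$.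
   Context: Here $K_-=\min\{k: c_k\neq0\}$ and $K_+=\max\{k:c_k\neq0\}$, i.e. $f$ is a function of finite duration in the Gaussian shift-invariant space $\{\sum_{k\in\mathbb Z}c_ke^{-\lambda(\cdot-\beta k)^2}: \{c_k\}\in\ell^\infty(\mathbb Z)\}$. *)

(* Defs.v *)
From Stdlib Require Import Reals ZArith List.
From Coquelicot Require Import Coquelicot.
Open Scope R_scope.

Definition gauss (lam beta : R) (k : Z) (x : R) : R :=
  exp (- lam * (x - beta * IZR k) ^ 2).

Definition gauss_sum (lam beta : R) (Km Kp : Z) (c : Z -> C) (x : R) : C :=
  fold_right (fun (n : nat) (acc : C) =>
                Cplus (Cmult (c (Km + Z.of_nat n)%Z)
                             (RtoC (gauss lam beta (Km + Z.of_nat n)%Z x))) acc)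
             (RtoC 0) (seq 0 (S (Z.to_nat (Kp - Km)))).

(* Main.v *)
Require Import Defs.
From Stdlib Require Import Reals ZArith List.
From Coquelicot Require Import Coquelicot.
Open Scope R_scope.
From Stdlib Require Import Lra Lia.

Module RF.
Lemma exp_INR_mul (n : nat) (y : R) : exp (INR n * y) = exp y ^ n.
Proof.
induction n as [|n IH].
- simpl. rewrite Rmult_0_l, exp_0; reflexivity.
- rewrite S_INR, Rmult_plus_distr_r, Rmult_1_l, exp_plus, IH. simpl. ring.
Qed.

Definition wgt (lam beta : R) (k : Z) : R := exp (- lam * (beta * IZR k) ^ 2).
Definition tt (lam beta x : R) : R := exp (2 * lam * beta * x).
Definition EE (lam beta : R) (Km : Z) (x : R) : R := exp (- lam * x ^ 2 + 2 * lam * beta * IZR Km * x).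

Lemma gauss_split lam beta Km (n : nat) x :
  gauss lam beta (Km + Z.of_nat n) x = EE lam beta Km x * wgt lam beta (Km + Z.of_nat n) * tt lam beta x ^ n.
Proof.
unfold gauss, EE, wgt, tt.
rewrite <- exp_INR_mul, <- !exp_plus. f_equal.
rewrite plus_IZR, <- INR_IZR_INZ. ring.
Qed.

Lemma gauss_deriv lam beta k x :
  is_derive (gauss lam beta k) x (gauss lam beta k x * (-2 * lam * (x - beta * IZR k))).
Proof.
unfold gauss. auto_derive; [exact I|]. replace (exp (- lam * ((x + - (beta * IZR k)) * ((x + - (beta * IZR k)) * 1)))) with (exp (- lam * (x - beta * IZR k) ^ 2)) by (f_equal; ring). ring.
Qed.

Lemma deriv_fst (f : R -> C) x l : is_derive f x l -> is_derive (fun y => fst (f y)) x (fst l).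
Proof.
intros H. unfold is_derive in *.
exact (filterdiff_comp' f fst x _ _ H (filterdiff_linear _ is_linear_fst)).
Qed.
Lemma deriv_snd (f : R -> C) x l : is_derive f x l -> is_derive (fun y => snd (f y)) x (snd l).
Proof.
intros H. unfold is_derive in *.
exact (filterdiff_comp' f snd x _ _ H (filterdiff_linear _ is_linear_snd)).
Qed.
Lemma deriv_uniq (f : R -> C) x l1 l2 : is_derive f x l1 -> is_derive f x l2 -> l1 = l2.
Proof.
intros H1 H2.
destruct l1 as [a1 b1], l2 as [a2 b2].
apply deriv_fst in H1 as H1'. apply deriv_fst in H2 as H2'.
apply deriv_snd in H1. apply deriv_snd in H2.
apply is_derive_unique in H1, H2, H1', H2'. simpl in *. congruence.
Qed.

Lemma Cmult_RtoC (a : C) (r : R) : Cmult a (RtoC r) = scal r a.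
Proof.
destruct a as [a1 a2]. unfold Cmult, RtoC, scal. simpl.
unfold prod_scal; simpl. unfold scal; simpl. unfold mult; simpl. f_equal; ring.
Qed.

Lemma fold_deriv (l : list nat) (a : nat -> C) (g g' : nat -> R -> R) x :
 (forall n, is_derive (g n) x (g' n x)) ->
 is_derive (fun y => fold_right (fun n acc => Cplus (Cmult (a n) (RtoC (g n y))) acc) (RtoC 0) l) x
           (fold_right (fun n acc => Cplus (Cmult (a n) (RtoC (g' n x))) acc) (RtoC 0) l).
Proof.
intros Hg. induction l as [|n l IH]; simpl.
- exact (is_derive_const (V := C_R_NormedModule) (RtoC 0) x).
- apply (is_derive_plus (V := C_R_NormedModule)); [|exact IH].
  rewrite Cmult_RtoC.
  apply (is_derive_ext (K := R_AbsRing) (V := C_R_NormedModule) (fun y => scal (g n y) (a n))).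
  + intros; rewrite Cmult_RtoC; reflexivity.
  + apply (is_derive_scal_l (K := R_AbsRing) (V := C_R_NormedModule)). apply Hg.
Qed.

Definition alpha lam beta Km x := -2 * lam * x + 2 * lam * beta * IZR Km.
Definition bb lam beta := 2 * lam * beta.
Definition dterm lam beta k x := gauss lam beta k x * (-2 * lam * (x - beta * IZR k)).

Lemma gauss_sum_deriv lam beta Km Kp c x :
  is_derive (gauss_sum lam beta Km Kp c) x
   (fold_right (fun n acc => Cplus (Cmult (c (Km + Z.of_nat n)%Z)
       (RtoC (dterm lam beta (Km + Z.of_nat n)%Z x))) acc)
     (RtoC 0) (seq 0 (S (Z.to_nat (Kp - Km))))).
Proof.
unfold gauss_sum.
apply (fold_deriv _ (fun n => c (Km + Z.of_nat n)%Z) (fun n => gauss lam beta (Km + Z.of_nat n)%Z)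
  (fun n y => gauss lam beta (Km + Z.of_nat n)%Z y * (-2 * lam * (y - beta * IZR (Km + Z.of_nat n)%Z)))).
intros n. apply gauss_deriv.
Qed.

Lemma dfac lam beta Km (n : nat) x :
  dterm lam beta (Km + Z.of_nat n) x =
  EE lam beta Km x * wgt lam beta (Km + Z.of_nat n) * tt lam beta x ^ n * (alpha lam beta Km x + bb lam beta * INR n).
Proof. unfold dterm, alpha, bb. rewrite gauss_split, plus_IZR, <- INR_IZR_INZ. ring. Qed.

Lemma EE_pos lam beta Km x : 0 < EE lam beta Km x.
Proof. apply exp_pos. Qed.
Lemma tt_pos lam beta x : 0 < tt lam beta x.
Proof. apply exp_pos. Qed.
Lemma wgt_pos lam beta k : 0 < wgt lam beta k.
Proof. apply exp_pos. Qed.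
Lemma bb_pos lam beta : 0 < lam -> 0 < beta -> 0 < bb lam beta.
Proof. intros; unfold bb; apply Rmult_lt_0_compat; [|assumption]; lra. Qed.
Lemma tt_inj lam beta x y : 0 < lam -> 0 < beta -> tt lam beta x = tt lam beta y -> x = y.
Proof.
intros hl hb h. unfold tt in h. apply exp_inv in h.
assert (0 < 2 * lam * beta) by (apply Rmult_lt_0_compat; lra).
apply (Rmult_eq_reg_l (2 * lam * beta)); [lra|]. lra.
Qed.
Lemma sq1 a : 0 <= a -> a ^ 2 = 1 -> a = 1.
Proof. intros h1 h2. nra. Qed.
End RF.

From mathcomp Require all_boot all_algebra complex Rstruct ring.

Module Alg.
Import all_boot all_algebra complex ring.
Import GRing.Theory Num.Theory.
Section AlgScope.
Local Open Scope ring_scope.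
Section Alg.
Variable R : rcfType.
Local Notation F := (R[i]).
Local Notation pc p := (map_poly (@conjc R) p).

Lemma deriv0_const (p : {poly F}) : p^`() = 0 -> p = (p`_0)%:P.
Proof.
move=> h; apply: size1_polyC; rewrite leqNgt; apply/negP => hs.
have hp : p != 0 by rewrite -size_poly_gt0 (ltn_trans _ hs).
have := congr1 (fun q : {poly F} => q`_(size p).-2) h.
rewrite coef_deriv coef0.
have -> : (size p).-2.+1 = (size p).-1 by case: (size p) hs => [|[|m]].
move/eqP; rewrite mulrn_eq0 -lead_coefE lead_coef_eq0 (negbTE hp) orbF.
by case: (size p) hs => [|[|m]].
Qed.

Lemma divides_deriv_const (p : {poly F}) : p %| p^`() -> p = (p`_0)%:P.
Proof.
move=> hd; apply: deriv0_const.
case: (eqVneq p 0) => [->|hp]; first by rewrite deriv0.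
apply/eqP; apply: contraT => hd0.
have := dvdp_leq hd0 hd; rewrite leqNgt (lt_size_deriv hp) //.
Qed.

Lemma wronsk (X Y : {poly F}) : X != 0 -> X^`() * Y = X * Y^`() ->
  exists c, Y = c *: X.
Proof.
move=> hX hW.
set G := gcdp X Y.
have hG : G != 0 by rewrite gcdp_eq0 negb_and hX.
set x1 := X %/ G; set y1 := Y %/ G.
have eX : X = x1 * G by rewrite divpK // dvdp_gcdl.
have eY : Y = y1 * G by rewrite divpK // dvdp_gcdr.
have cop : coprimep x1 y1 by apply: coprimep_div_gcd; rewrite hX.
have hW' : x1^`() * y1 = x1 * y1^`().
  have : G * G * (x1^`() * y1 - x1 * y1^`()) = 0.
    move: hW; rewrite eX eY !derivM => hW.
    transitivity ((x1^`() * G + x1 * G^`()) * (y1 * G) - x1 * G * (y1^`() * G + y1 * G^`())); first by ring.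
    by rewrite hW subrr.
  by move/eqP; rewrite mulf_eq0 mulf_eq0 (negbTE hG) /= subr_eq0 => /eqP.
have hx1 : x1 = (x1`_0)%:P.
  apply: divides_deriv_const.
  by rewrite -(Gauss_dvdpl _ cop) hW' dvdp_mulIl.
have hy1 : y1 = (y1`_0)%:P.
  apply: divides_deriv_const.
  have cop' : coprimep y1 x1 by rewrite coprimep_sym.
  by rewrite -(Gauss_dvdpl _ cop') mulrC -hW' mulrC dvdp_mulIl.
have hx0 : x1`_0 != 0.
  apply: contraNneq hX => h0; by rewrite eX hx1 h0 mul0r.
exists (y1`_0 / x1`_0).
rewrite eY eX hy1 hx1 -mul_polyC mulrA -polyCM !coefC /= divfK //.
Qed.

Lemma rid1 {T : comNzRingType} (x y b c : T) : x * c * (y * b) = x * y * (b * c).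
Proof. ring. Qed.

Lemma ring_id {T : comNzRingType} (a a' ac ac' b b' bc bc' U Uc : T) : U * Uc = 1 ->
  (a'*ac - a*ac')*(b*bc' - b'*bc) =
  (b'*a + b*a')*(bc'*ac + bc*ac') - (U*(bc'*a + bc*a'))*(Uc*(b'*ac + b*ac')).
Proof.
move=> h.
have -> : U*(bc'*a + bc*a')*(Uc*(b'*ac + b*ac')) = (U*Uc)*((bc'*a + bc*a')*(b'*ac + b*ac')) by ring.
rewrite h mul1r; ring.
Qed.

Lemma pcK (p : {poly F}) : pc (pc p) = p.
Proof. by rewrite (map_polyK (@conjcK R)) // conjc0. Qed.

Lemma pc_eq0 (p : {poly F}) : (pc p == 0) = (p == 0).
Proof. by rewrite map_poly_eq0. Qed.

Lemma key (P Q : {poly F}) : P != 0 -> P * pc P = Q * pc Q ->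
  P^`() * pc P^`() = Q^`() * pc Q^`() ->
  exists w, Q = w *: P \/ Q = w *: pc P.
Proof.
move=> hP hN hD.
set A := gcdp P Q.
have hA : A != 0 by rewrite gcdp_eq0 negb_and hP.
set B := P %/ A; set Bt := Q %/ A.
have eP : P = B * A by rewrite divpK // dvdp_gcdl.
have eQ : Q = Bt * A by rewrite divpK // dvdp_gcdr.
have cop : coprimep B Bt by apply: coprimep_div_gcd; rewrite hP.
have hB : B != 0 by apply: contraNneq hP => h; rewrite eP h mul0r.
have hBB : B * pc B = Bt * pc Bt.
  have : (B * pc B - Bt * pc Bt) * (A * pc A) = 0.
    transitivity (P * pc P - Q * pc Q); last by rewrite hN subrr.
    by rewrite eP eQ !rmorphM /=; ring.
  move/eqP; rewrite mulf_eq0 mulf_eq0 pc_eq0 (negbTE hA) /= orbF subr_eq0.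
  by move/eqP.
have copBtB : coprimep Bt B by rewrite coprimep_sym.
have d1 : Bt %| pc B.
  rewrite -(Gauss_dvdpl (pc B) copBtB) (mulrC (pc B) B) hBB.
  exact: dvdp_mulIl.
have d2 : pc B %| Bt.
  rewrite -(dvdp_map (@conjc R)) pcK.
  rewrite -(Gauss_dvdpl (pc Bt) cop) (mulrC (pc Bt) Bt) -hBB.
  exact: dvdp_mulIl.
have : Bt %= pc B by rewrite /eqp d1 d2.
case/eqpP => [[c1 c2]] /= /andP [hc1 hc2] e12.
set u := c2 / c1.
have eBt : Bt = u *: pc B.
  by rewrite /u mulrC -scalerA -e12 scalerA mulVf // scale1r.
clearbody u.
have hD' : (A^`() * pc A - A * pc A^`()) * (B * pc B^`() - B^`() * pc B) = 0.
  have hBB' := hBB.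
  rewrite eBt map_polyZ pcK -!mul_polyC in hBB'.
  have huu' : u%:P * (u^*)%:P = 1.
    apply: (mulIf (_ : B * pc B != 0)); first by rewrite mulf_neq0 // pc_eq0.
    rewrite mul1r {2}hBB'; exact: esym (rid1 _ _ _ _).
  have eP' : P^`() = B^`() * A + B * A^`() by rewrite eP derivM.
  have eQ' : Q^`() = u%:P * ((pc B^`()) * A + pc B * A^`()).
    by rewrite eQ eBt -mul_polyC -mulrA derivM derivC mul0r add0r derivM deriv_map.
  transitivity (P^`() * pc P^`() - Q^`() * pc Q^`()); last by rewrite hD subrr.
  rewrite eP' eQ' !(rmorphD, rmorphM) /= map_polyC /= !pcK.
  exact: ring_id huu'.
move/eqP: hD'; rewrite mulf_eq0 => /orP [] /eqP h.
- have [c hc] : exists c, pc A = c *: A.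
    apply: wronsk => //.
    by rewrite deriv_map; apply/eqP; rewrite -subr_eq0 h.
  have hc0 : c != 0.
    apply: contraNneq hA => h0; move: hc; rewrite h0 scale0r => /eqP.
    by rewrite pc_eq0.
  exists (u / c); right.
  by rewrite eQ eBt eP rmorphM /= hc -scalerAr scalerA divfK // scalerAl.
- have [c hc] : exists c, pc B = c *: B.
    apply: wronsk => //.
    by rewrite deriv_map; apply/eqP; rewrite eq_sym -subr_eq0 h.
  exists (u * c); left.
  by rewrite eQ eBt hc scalerA eP scalerAl.
Qed.

End Alg.
End AlgScope.
End Alg.

Module Core.
Import all_boot all_algebra complex ring.
Import GRing.Theory Num.Theory.
Import Alg.
Section CoreScope.
Local Open Scope ring_scope.
Local Open Scope complex_scope.
Section Core.
Variable R : rcfType.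
Local Notation F := (R[i]).
Local Notation pc p := (map_poly (@conjc R) p).
Local Notation nrm z := (z * conjc z).

Lemma cM (x y : F) : (conjc (x * y)) = (conjc x) * (conjc y).
Proof. exact: rmorphM. Qed.
Lemma cD (x y : F) : (conjc (x + y)) = (conjc x) + (conjc y).
Proof. exact: rmorphD. Qed.

Lemma unimod (P Q : {poly F}) w : P != 0 -> P * pc P = Q * pc Q ->
  (Q = w *: P \/ Q = w *: pc P) -> w * (conjc w) = 1.
Proof.
move=> hP hN hQ.
have hX : P * pc P != 0 by rewrite mulf_neq0 // pc_eq0.
have e : P * pc P = (w * (conjc w)) *: (P * pc P).
  rewrite {1}hN; case: hQ => ->; rewrite map_polyZ ?pcK -scalerAl -scalerAr scalerA //.
  by rewrite (mulrC (pc P) P).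
apply/eqP; rewrite -subr_eq0; apply/eqP.
have : (w * (conjc w) - 1) *: (P * pc P) = 0 by rewrite scalerBl -e scale1r subrr.
by move/eqP; rewrite scaler_eq0 (negbTE hX) orbF => /eqP.
Qed.

Lemma interp (p : {poly F}) (rs : seq F) : uniq rs -> (size p <= size rs)%N ->
  (forall r, r \in rs -> p.[r] = 0) -> p = 0.
Proof.
move=> hu hs hr; apply/eqP; apply: contraT => hp.
have : all (root p) rs by apply/allP => r /hr /eqP.
move/(max_poly_roots hp)/(_ hu) => h.
by move: (leq_trans h hs); rewrite ltnn.
Qed.

Lemma hornJ (P : {poly F}) r : (conjc r) = r -> (pc P).[r] = (conjc (P.[r])).
Proof. by move=> hr; rewrite -{1}hr horner_map. Qed.

Lemma nrmS (P : {poly F}) r : (conjc r) = r -> nrm (P.[r]) = (P * pc P).[r].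
Proof. by move=> hr; rewrite hornerM hornJ. Qed.

Lemma nrm_lin (e a b r p q : F) : (conjc e) = e -> (conjc a) = a -> (conjc b) = b -> (conjc r) = r ->
  nrm (e * (a * p + b * (r * q))) =
  e * e * (a * a * nrm p + a * b * r * (q * (conjc p) + p * (conjc q)) + b * b * r * r * nrm q).
Proof.
move=> he ha hb hr.
rewrite !cM cD !cM he ha hb hr.
ring.
Qed.

Lemma nrm_sc (e p : F) : (conjc e) = e -> nrm (e * p) = e * e * nrm p.
Proof. move=> he; rewrite cM he; ring. Qed.

Lemma size_S (P : {poly F}) N : (size P <= N.+1)%N -> (size (P * pc P)%R <= (N + N).+1)%N.
Proof.
move=> h; apply: (leq_trans (size_polyMleq _ _)).
rewrite size_map_poly.
case: (size P) h => [|n] //= h.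
by rewrite addnS ltnS; rewrite ltnS in h; apply: leq_add.
Qed.

Lemma size_der (P : {poly F}) : (size P^`() <= size P)%N.
Proof.
case: (eqVneq P 0) => [->|hP]; first by rewrite deriv0.
exact: ltnW (lt_size_deriv hP).
Qed.

Lemma core (T : eqType) (Pc Pd : {poly F}) (N : nat) (G : seq T) (tau : T -> F)
  (E A B : T -> R) :
  Pc != 0 -> (size Pc <= N.+1)%N -> (size Pd <= N.+1)%N -> uniq (map tau G) ->
  size G = (N + N)%N.+1 ->
  (forall g, g \in G -> (conjc (tau g)) = tau g /\ tau g != 0 /\ E g != 0 /\ B g != 0 /\
     nrm ((E g)%:C * Pd.[tau g]) = nrm ((E g)%:C * Pc.[tau g]) /\
     nrm ((E g)%:C * ((A g)%:C * Pd.[tau g] + (B g)%:C * (tau g * Pd^`().[tau g]))) =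
     nrm ((E g)%:C * ((A g)%:C * Pc.[tau g] + (B g)%:C * (tau g * Pc^`().[tau g])))) ->
  exists w, w * (conjc w) = 1 /\ (Pd = w *: Pc \/ Pd = w *: pc Pc).
Proof.
move=> hc0 hsc hsd hu hsG hG.
have hrs : size (map tau G) = (N + N)%N.+1 by rewrite size_map.
have eS : Pd * pc Pd = Pc * pc Pc.
  apply/eqP; rewrite -subr_eq0; apply/eqP.
  apply: (interp _ _ hu).
    rewrite hrs; apply: (leq_trans (size_polyD _ _)).
    by rewrite geq_max size_polyN !size_S.
  move=> r /mapP [g hg ->].
  have [hr [hr0 [he [hb [h1 h2]]]]] := hG g hg.
  rewrite hornerD hornerN -!nrmS //.
  move: h1; rewrite !nrm_sc ?conjc_real // => /mulfI -> ; first by rewrite subrr.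
  by rewrite mulf_neq0 // eq_complex /= negb_and he.
have eS' : (Pd * pc Pd)^`() = (Pc * pc Pc)^`() by rewrite eS.
have eT : Pd^`() * pc Pd^`() = Pc^`() * pc Pc^`().
  apply/eqP; rewrite -subr_eq0; apply/eqP.
  apply: (interp _ _ hu).
    rewrite hrs; apply: (leq_trans (size_polyD _ _)).
    rewrite geq_max size_polyN !size_S //.
      exact: leq_trans (size_der _) hsc.
    exact: leq_trans (size_der _) hsd.
  move=> r /mapP [g hg ->].
  have [hr [hr0 [he [hb [h1 h2]]]]] := hG g hg.
  move: h1 h2; rewrite !nrm_lin ?conjc_real // !nrm_sc ?conjc_real //.
  set r0 := tau g.
  have hd : forall P : {poly F}, P^`().[r0] * (conjc (P.[r0])) + P.[r0] * (conjc (P^`().[r0])) = (P * pc P)^`().[r0].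
    by move=> P; rewrite derivM deriv_map hornerD !hornerM !hornJ.
  rewrite !hd !nrmS // eS' => h1.
  have ee : (E g)%:C * (E g)%:C != 0 by rewrite mulf_neq0 // eq_complex /= negb_and he.
  move/(mulfI ee): h1 => ->.
  move/(mulfI ee)/addrI.
  rewrite -nrmS // -nrmS // hornerD hornerN.
  move=> h; apply/eqP; rewrite subr_eq0; apply/eqP.
  have hbb : (B g)%:C * (B g)%:C * r0 * r0 != 0.
    by rewrite !mulf_neq0 // eq_complex /= negb_and hb.
  by rewrite !nrmS // in h; move/(mulfI hbb): h.
have [w hw] := @key R Pc Pd hc0 (esym eS) (esym eT).
exists w; split => //.
exact: unimod hc0 (esym eS) hw.
Qed.

End Core.
End CoreScope.
End Core.

Module BR.
Import all_boot all_algebra complex Rstruct ring.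
Import GRing.Theory Num.Theory.
Import Alg Core.
Section BRScope.
Local Open Scope ring_scope.
Local Open Scope complex_scope.

Definition phi (z : C) : R[i] := Complex z.1 z.2.

Lemma phiD a b : phi (Cplus a b) = phi a + phi b.
Proof. by case: a; case: b. Qed.
Lemma phiM a b : phi (Cmult a b) = phi a * phi b.
Proof. by case: a; case: b. Qed.
Lemma phiR r : phi (RtoC r) = r%:C.
Proof. by []. Qed.
Lemma phiJ a : phi (Cconj a) = conjc (phi a).
Proof. by case: a. Qed.
Lemma phi_inj a b : phi a = phi b -> a = b.
Proof. by case: a; case: b => ? ? ? ? [-> ->]. Qed.

Lemma normE (z : C) : phi z * conjc (phi z) = (pow (Cmod z) 2)%:C.
Proof.
rewrite Cmod2_alt -sqr_normc -add_Re2_Im2 !RpowE.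
by case: z.
Qed.

Lemma phi_fold (l : list nat) (a : nat -> C) (h : nat -> R) :
  phi (fold_right (fun n acc => Cplus (Cmult (a n) (RtoC (h n))) acc) (RtoC 0) l)
  = \sum_(n <- l) phi (a n) * (h n)%:C.
Proof.
elim: l => [|n l IH] /=; first by rewrite big_nil.
by rewrite big_cons phiD phiM IH.
Qed.

Lemma seq_iota s n : List.seq s n = iota s n.
Proof. by elim: n s => //= n IH s; rewrite IH. Qed.

Definition Pof lam beta Km N (c : Z -> C) : {poly R[i]} :=
  \poly_(n < N.+1) (phi (c (Z.add Km (Z.of_nat n))) * (RF.wgt lam beta (Z.add Km (Z.of_nat n)))%:C).

Lemma phi_gsum lam beta Km Kp c x :
  phi (gauss_sum lam beta Km Kp c x) =
  (RF.EE lam beta Km x)%:C * (Pof lam beta Km (Z.to_nat (Z.sub Kp Km)) c).[(RF.tt lam beta x)%:C].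
Proof.
rewrite /gauss_sum phi_fold seq_iota horner_poly mulr_sumr.
have -> : forall m, iota 0 m = index_iota 0 m by move=> m; rewrite /index_iota subn0.
rewrite big_mkord.
apply: eq_bigr => i _.
rewrite RF.gauss_split RpowE !rmorphM rmorphXn /=.
ring.
Qed.

Lemma XderivE (N : nat) (E : nat -> R[i]) :
  (\poly_(n < N.+1) E n)^`() * 'X = \poly_(n < N.+1) (n%:R * E n).
Proof.
apply/polyP => i; rewrite mulrC coefXM.
case: i => [|i] /=; first by rewrite coef_poly /= mul0r.
rewrite coef_deriv !coef_poly.
by case: ifP => _; [rewrite mulr_natl | rewrite mul0rn].
Qed.

Lemma phi_dsum lam beta Km Kp c x :
  phi (fold_right (fun n acc => Cplus (Cmult (c (Z.add Km (Z.of_nat n)))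
       (RtoC (RF.dterm lam beta (Z.add Km (Z.of_nat n)) x))) acc)
     (RtoC 0) (List.seq 0 (S (Z.to_nat (Z.sub Kp Km))))) =
  (RF.EE lam beta Km x)%:C *
   ((RF.alpha lam beta Km x)%:C * (Pof lam beta Km (Z.to_nat (Z.sub Kp Km)) c).[(RF.tt lam beta x)%:C]
    + (RF.bb lam beta)%:C * ((RF.tt lam beta x)%:C * (Pof lam beta Km (Z.to_nat (Z.sub Kp Km)) c)^`().[(RF.tt lam beta x)%:C])).
Proof.
rewrite phi_fold seq_iota (mulrC (RF.tt lam beta x)%:C) -hornerMX /Pof XderivE !horner_poly.
rewrite !mulr_sumr -big_split mulr_sumr.
have -> : forall m, iota 0 m = index_iota 0 m by move=> m; rewrite /index_iota subn0.
rewrite big_mkord.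
apply: eq_bigr => i _ /=.
rewrite RF.dfac; move: (RF.alpha lam beta Km x) (RF.bb lam beta) => al bt.
rewrite RpowE INRE !rmorphM !rmorphD !rmorphM rmorphXn rmorph_nat /=.
ring.
Qed.


Definition psi (w : R[i]) : C := let: Complex a b := w in (a, b).
Lemma phi_psi w : phi (psi w) = w.
Proof. by case: w. Qed.

Lemma pos_neq0 {r : R} : Rlt 0 r -> r != 0.
Proof. by move=> h; apply/eqP => e; rewrite e in h; exact: (Rlt_irrefl _ h). Qed.

Lemma posC_neq0 {r : R} : Rlt 0 r -> r%:C != 0.
Proof. by move=> h; rewrite eq_complex /= negb_and pos_neq0. Qed.

Lemma in_In (x : R) (s : seq R) : x \in s -> In x s.
Proof.
elim: s => //= a s IH; rewrite inE => /orP [/eqP ->|/IH h]; [by left | by right].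
Qed.

Lemma size_length (s : seq R) : size s = length s.
Proof. by elim: s => //= a s ->. Qed.

Lemma nodup_uniq (s : seq R) : NoDup s -> uniq s.
Proof.
elim: s => //= a s IH /NoDup_cons_iff [h1 h2].
rewrite IH // andbT; apply/negP => /in_In; exact: h1.
Qed.

Lemma main (beta lam : R) (Km Kp : Z) (c d : Z -> C) (Gamma : list R) (f' g' : R -> C) :
  Rlt 0 beta -> Rlt 0 lam -> c Km <> RtoC 0 ->
  NoDup Gamma -> length Gamma = S (Nat.add (Z.to_nat (Z.sub Kp Km)) (Z.to_nat (Z.sub Kp Km))) ->
  (forall x, is_derive (gauss_sum lam beta Km Kp c) x (f' x)) ->
  (forall x, is_derive (gauss_sum lam beta Km Kp d) x (g' x)) ->
  (forall gam, In gam Gamma ->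
     Cmod (gauss_sum lam beta Km Kp d gam) = Cmod (gauss_sum lam beta Km Kp c gam) /\
     Cmod (g' gam) = Cmod (f' gam)) ->
  exists z : C, Cmod z = IZR 1 /\
    ((forall x, gauss_sum lam beta Km Kp d x = Cmult z (gauss_sum lam beta Km Kp c x)) \/
     (forall x, gauss_sum lam beta Km Kp d x = Cmult z (Cconj (gauss_sum lam beta Km Kp c x)))).
Proof.
move=> hb hl hc hnd hlen hf hg hG.
set N := Z.to_nat (Z.sub Kp Km).
set Pc := Pof lam beta Km N c.
set Pd := Pof lam beta Km N d.
have efc x : phi (gauss_sum lam beta Km Kp c x) = (RF.EE lam beta Km x)%:C * Pc.[(RF.tt lam beta x)%:C].
  exact: phi_gsum.
have efd x : phi (gauss_sum lam beta Km Kp d x) = (RF.EE lam beta Km x)%:C * Pd.[(RF.tt lam beta x)%:C].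
  exact: phi_gsum.
have ef'c x : phi (f' x) = (RF.EE lam beta Km x)%:C *
   ((RF.alpha lam beta Km x)%:C * Pc.[(RF.tt lam beta x)%:C]
    + (RF.bb lam beta)%:C * ((RF.tt lam beta x)%:C * Pc^`().[(RF.tt lam beta x)%:C])).
  by rewrite (RF.deriv_uniq _ _ _ _ (hf x) (RF.gauss_sum_deriv lam beta Km Kp c x)) phi_dsum.
have ef'd x : phi (g' x) = (RF.EE lam beta Km x)%:C *
   ((RF.alpha lam beta Km x)%:C * Pd.[(RF.tt lam beta x)%:C]
    + (RF.bb lam beta)%:C * ((RF.tt lam beta x)%:C * Pd^`().[(RF.tt lam beta x)%:C])).
  by rewrite (RF.deriv_uniq _ _ _ _ (hg x) (RF.gauss_sum_deriv lam beta Km Kp d x)) phi_dsum.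
have hPc : Pc != 0.
  apply/eqP => h0.
  have := congr1 (fun p : {poly R[i]} => p`_0) h0.
  rewrite coef0 /Pc /Pof coef_poly /= Z.add_0_r => /eqP.
  rewrite mulf_eq0 (negbTE (posC_neq0 (RF.wgt_pos _ _ _))) orbF => /eqP h1.
  by apply: hc; apply: phi_inj; rewrite h1.
have [w [hw1 hw2]] : exists w, w * conjc w = 1 /\ (Pd = w *: Pc \/ Pd = w *: map_poly (@conjc R) Pc).
  apply: (@core R R Pc Pd N Gamma (fun g => (RF.tt lam beta g)%:C) (RF.EE lam beta Km)
           (RF.alpha lam beta Km) (fun _ => RF.bb lam beta)) => //.
  - exact: size_poly.
  - exact: size_poly.
  - rewrite map_inj_uniq ?nodup_uniq // => x y /complexI.
    exact: RF.tt_inj.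
  - move=> g /in_In hgin; have [h1 h2] := hG g hgin.
    split; first exact: conjc_real.
    split; first exact: posC_neq0 (RF.tt_pos _ _ _).
    split; first exact: pos_neq0 (RF.EE_pos _ _ _ _).
    split; first exact: pos_neq0 (RF.bb_pos _ _ hl hb).
    split.
      by rewrite -efc -efd !normE h1.
    by rewrite -ef'c -ef'd !normE h2.
exists (psi w); split.
  apply: RF.sq1; first exact: Cmod_ge_0.
  apply: complexI; rewrite -normE phi_psi hw1; by [].
case: hw2 => hw; [left|right] => x; apply: phi_inj.
  by rewrite phiM phi_psi efd efc hw hornerZ mulrCA.
rewrite phiM phiJ phi_psi efd efc hw hornerZ cM conjc_real hornJ ?conjc_real //.
by rewrite mulrCA.
Qed.


End BRScope.
End BR.

Theorem theorem4p1 (beta lam : R) (Km Kp : Z) (c d : Z -> C) (Gamma : list R)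
  (f' g' : R -> C) :
  0 < beta -> 0 < lam -> (Km <= Kp)%Z ->
  c Km <> RtoC 0 -> c Kp <> RtoC 0 ->
  NoDup Gamma -> length Gamma = Z.to_nat (2 * (Kp - Km) + 1) ->
  (forall x : R, is_derive (gauss_sum lam beta Km Kp c) x (f' x)) ->
  (forall x : R, is_derive (gauss_sum lam beta Km Kp d) x (g' x)) ->
  (forall gam : R, In gam Gamma ->
     Cmod (gauss_sum lam beta Km Kp d gam) = Cmod (gauss_sum lam beta Km Kp c gam) /\
     Cmod (g' gam) = Cmod (f' gam)) ->
  exists z : C, Cmod z = 1 /\
    ((forall x : R, gauss_sum lam beta Km Kp d x = Cmult z (gauss_sum lam beta Km Kp c x)) \/
     (forall x : R, gauss_sum lam beta Km Kp d x = Cmult z (Cconj (gauss_sum lam beta Km Kp c x)))).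
Proof.
intros hb hl hle hc1 hc2 hnd hlen hf hg hG.
apply (BR.main beta lam Km Kp c d Gamma f' g' hb hl hc1 hnd); auto.
rewrite hlen. lia.
Qed.
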